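(* Let $\mathcal{M}=\langle M,\circ,e\rangle$ be an effective mge monoid and let $\mathcal{T}=\langle \Sigma^*\times\mathcal{M},Q,I,F,\Delta\rangle$ be a functional real-time monoidal finite-state transducer with $\langle\varepsilon,e\rangle\in L(\mathcal{T})$. Then there is a bimachine $\mathcal{B}=\langle\mathcal{M},\mathcal{A}_L,\mathcal{A}_R,\psi\rangle$ such that $\mathcal{A}_L$ has at most $2^{|Q|}$ states, $\mathcal{A}_R$ has at most $2^{|Q|}$ states, and $O_{\mathcal{B}}=O_{\mathcal{T}}$ (as partial functions $\Sigma^*\to M$).
   Context: A monoid $\langle M,\circ,e\rangle$ has right cancellation if $ac=bc$ implies $a=b$. A tuple $\langle m_1,\dots,m_n\rangle\in M^n$ is equalizable if there is $\langle x_1,\dots,x_n\rangle\in M^n$ (an equalizer) with $m_1x_1=\dots=m_nx_n$; an instance of an equalizer $\langle x_1,\dots,x_n\rangle$ is any $\langle x_1x,\dots,x_nx\rangle$ with $x\in M$; a most general equalizer (mge) is an equalizer of which every equalizer is an instance. An mge monoid is a monoid with right cancellation in which every equalizable pair has an mge. An element $m$ is invertible if $mn=e$ for some $n$ (denoted $m^{-1}$). An mge monoid is effective if (i) $M$ is represented as a recursive subset of $\mathbb{N}$ with computable operation, (ii) equality is decidable, (iii) it is decidable whether a pair is equalizable and there is a computable function $\eta:M^2\to M^2$ with $\eta(m,m')$ an mge of $\langle m,m'\rangle$ for every equalizable pair, (iv) inverses of invertible elements are computable. A monoidal finite-state transducer is $\mathcal{T}=\langle\Sigma^*\times\mathcal{M},Q,I,F,\Delta\rangle$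 with $\Sigma$ a finite alphabet, $Q$ finite, $I,F\subseteq Q$, and finite $\Delta\subseteq Q\times((\Sigma\cup\{\varepsilon\})\times M)\times Q$; it is real-time if $\Delta\subseteq Q\times(\Sigma\times M)\times Q$. The generalized transition relation $\Delta^*$ is the least set containing $\langle q,\langle\varepsilon,e\rangle,q\rangle$ for all $q$ and closed under: $\langle q_1,\langle u,w\rangle,q_2\rangle\in\Delta^*$ and $\langle q_2,\langle a,m\rangle,q_3\rangle\in\Delta$ imply $\langle q_1,\langle ua,wm\rangle,q_3\rangle\in\Delta^*$. $L(\mathcal{T})=\{\langle u,m\rangle:\exists p\in I,q\in F,\ \langle p,\langle u,m\rangle,q\rangle\in\Delta^*\}$. $\mathcal{T}$ is functional if $L(\mathcal{T})$ is (the graph of) a partial function, denoted $O_{\mathcal{T}}:\Sigma^*\to M$. A bimachine is $\mathcal{B}=\langle\mathcal{M},\mathcal{A}_L,\mathcal{A}_R,\psi\rangle$ where $\mathcal{A}_L=\langle\Sigma,L,s_L,L,\delta_L\rangle$ and $\mathcal{A}_R=\langle\Sigma,R,s_R,R,\delta_R\rangle$ are deterministic finite automata (all states final) and $\psi:L\times\Sigma\times R\to M$ is a partial function. Define $\psi^*(l,\varepsilon,r)=e$ and $\psi^*(l,t\sigma,r)=\psi^*(l,t,\delta_R(r,\sigma))\circ\psi(\delta_L^*(l,t),\sigma,r)$; the function represented by $\mathcal{B}$ is $O_{\mathcal{B}}(t)=\psi^*(s_L,t,s_R)$ (partial). *)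

(* Defs.v *)
From mathcomp Require Import all_boot.
Set Implicit Arguments.
Unset Strict Implicit.
Unset Printing Implicit Defensive.

Section Monoid.
Variables (M : countType) (op : M -> M -> M) (e : M).

Definition is_monoid : Prop :=
  [/\ forall a b c, op a (op b c) = op (op a b) c,
      forall a, op e a = a &
      forall a, op a e = a].

Definition right_cancellative : Prop :=
  forall a b c, op a c = op b c -> a = b.

Definition is_equalizer (m1 m2 : M) (x : M * M) : Prop :=
  op m1 x.1 = op m2 x.2.

Definition equalizable (m1 m2 : M) : Prop :=
  exists x, is_equalizer m1 m2 x.

Definition is_instance (x y : M * M) : Prop :=
  exists z, y = (op x.1 z, op x.2 z).

Definition is_mge (m1 m2 : M) (x : M * M) : Prop :=
  is_equalizer m1 m2 x /\
  forall y, is_equalizer m1 m2 y -> is_instance x y.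

Definition mge_monoid : Prop :=
  [/\ is_monoid, right_cancellative &
      forall m1 m2, equalizable m1 m2 -> exists x, is_mge m1 m2 x].

Definition invertible (m : M) : Prop := exists n, op m n = e.

(* Effectiveness: (i) M is a countType (injection into nat) and op is a Rocq
   function; (ii) equality is decidable (eqType); (iii) equalizability is
   decided by a function and an mge is given by a function eta; (iv) inverses
   of invertible elements are given by a function. *)
Definition effective_mge_monoid : Prop :=
  [/\ mge_monoid,
      (exists eqzb : M -> M -> bool,
          forall m1 m2, eqzb m1 m2 <-> equalizable m1 m2),
      (exists eta : M -> M -> M * M,
          forall m1 m2, equalizable m1 m2 -> is_mge m1 m2 (eta m1 m2)) &
      (exists inv : M -> M,
          forall m, invertible m -> op m (inv m) = e)].
End Monoid.

Section Transducer.
Variables (M : countType) (op : M -> M -> M) (e : M).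
Variables (Sigma Q : finType).
Variable Delta : seq (Q * Sigma * M * Q).

Inductive gen_trans : Q -> seq Sigma -> M -> Q -> Prop :=
| gen_refl q : gen_trans q [::] e q
| gen_step q1 u w q2 a m q3 :
    gen_trans q1 u w q2 -> (q2, a, m, q3) \in Delta ->
    gen_trans q1 (rcons u a) (op w m) q3.

Variables (I F : {set Q}).

Definition in_lang (u : seq Sigma) (m : M) : Prop :=
  exists p q, [/\ p \in I, q \in F & gen_trans p u m q].

Definition functional : Prop :=
  forall u m1 m2, in_lang u m1 -> in_lang u m2 -> m1 = m2.
End Transducer.

Section Bimachine.
Variables (M : countType) (op : M -> M -> M) (e : M).
Variables (Sigma L R : finType).
Variables (deltaL : L -> Sigma -> L) (deltaR : R -> Sigma -> R).
Variable psi : L -> Sigma -> R -> option M.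

Definition deltaL_star (l : L) (t : seq Sigma) : L := foldl deltaL l t.

(* psi_star_rev l rt r = psi^*(l, rev rt, r), by recursion on the last letter:
   psi^*(l, t s, r) = psi^*(l, t, deltaR r s) o psi(deltaL^*(l,t), s, r) *)
Fixpoint psi_star_rev (l : L) (rt : seq Sigma) (r : R) : option M :=
  match rt with
  | [::] => Some e
  | s :: rt' =>
      match psi_star_rev l rt' (deltaR r s),
            psi (deltaL_star l (rev rt')) s r with
      | Some a, Some b => Some (op a b)
      | _, _ => None
      end
  end.

Definition psi_star (l : L) (t : seq Sigma) (r : R) : option M :=
  psi_star_rev l (rev t) r.
End Bimachine.

(* Main.v *)
Require Import Defs.
From mathcomp Require Import all_boot.
From Stdlib Require Import ClassicalEpsilon.
Set Implicit Arguments. Unset Strict Implicit. Unset Printing Implicit Defensive.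

Definition pickP {A : Type} (P : A -> Prop) (d : A) : A :=
  match excluded_middle_informative (exists x, P x) with
  | left H => proj1_sig (constructive_indefinite_description P H)
  | right _ => d end.

Lemma pickP_spec A (P : A -> Prop) d : (exists x, P x) -> P (pickP P d).
Proof.
rewrite /pickP; case: excluded_middle_informative => // H _.
exact: proj2_sig (constructive_indefinite_description P H).
Qed.

Section Tuple.
Variables (M : countType) (op : M -> M -> M) (e : M).
Hypothesis assoc : forall a b c, op a (op b c) = op (op a b) c.
Hypothesis idl : forall a, op e a = a.
Hypothesis idr : forall a, op a e = a.
Hypothesis rcan : forall a b c, op a c = op b c -> a = b.
Hypothesis pmge : forall m1 m2, equalizable op m1 m2 -> exists x, is_mge op m1 m2 x.
Variable Q : eqType.

Definition eqz (a : Q -> M) (s : seq Q) (y : Q -> M) :=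
  forall p q, p \in s -> q \in s -> op (a p) (y p) = op (a q) (y q).
Definition mgeS a s x := eqz a s x /\
  forall y, eqz a s y -> exists k, forall q, q \in s -> y q = op (x q) k.

Lemma tuple_mge a s : (exists y, eqz a s y) -> exists x, mgeS a s x.
Proof.
elim: s => [|q s IH] [y Hy].
  exists (fun _ => e); split; first by move=> p r.
  by move=> y' _; exists e.
have Hy' : eqz a s y by move=> p r Hp Hr; apply: Hy; rewrite inE ?Hp ?Hr orbT.
have [x0 [Hx0 Hx0m]] := IH (ex_intro _ y Hy').
case: s IH Hy' Hx0 Hx0m Hy => [|r s] IH Hy' Hx0 Hx0m Hy.
  exists (fun _ => e); split.
    by move=> p p'; rewrite !inE => /eqP-> /eqP->.
  move=> y' _; exists (y' q) => p; rewrite inE => /eqP->; by rewrite idl.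
set c := op (a r) (x0 r).
have [k0 Hk0] := Hx0m y Hy'.
have Heq : equalizable op c (a q).
  exists (k0, y q); rewrite /is_equalizer /= /c -assoc -Hk0 ?inE ?eqxx //.
  apply: Hy; by rewrite !inE eqxx ?orbT.
have [[g h] [Hgh Hmge]] := pmge Heq.
rewrite /is_equalizer /= in Hgh.
exists (fun p => if p == q then h else op (x0 p) g); split.
  have Hall : forall p, p \in [:: q, r & s] ->
      op (a p) (if p == q then h else op (x0 p) g) = op c g.
    move=> p; case: eqP => [->|Hpq] Hp; first by rewrite Hgh.
    have Hp' : p \in r :: s by move: Hp; rewrite inE => /orP[/eqP|//].
    by rewrite assoc /c (Hx0 p r Hp') // inE eqxx.
  by move=> p p' Hp Hp'; rewrite !Hall.
move=> y' Hy'2.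
have Hy'3 : eqz a (r :: s) y'.
  by move=> p p' Hp Hp'; apply: Hy'2; rewrite inE ?Hp ?Hp' orbT.
have [k Hk] := Hx0m y' Hy'3.
have : is_equalizer op c (a q) (k, y' q).
  rewrite /is_equalizer /= /c -assoc -Hk ?inE ?eqxx //; apply: Hy'2; by rewrite !inE eqxx ?orbT.
move/Hmge => [k' /= []] Hk1 Hk2.
exists k' => p; case: eqP => [->|Hpq] Hp; first by [].
have Hp' : p \in r :: s by move: Hp; rewrite inE => /orP[/eqP|//].
by rewrite Hk // Hk1 assoc.
Qed.

Lemma mge_transfer a a' s x b :
  eqz a s b -> eqz a' s b -> mgeS a s x -> mgeS a' s x.
Proof.
move=> Hb Hb' [Hx Hxm].
have [k Hk] := Hxm b Hb.
have Hxa' : eqz a' s x.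
  move=> p q Hp Hq; apply: (@rcan _ _ k); rewrite -!assoc -!Hk //; exact: Hb'.
split=> // y Hy.
have [x' [Hx' Hx'm]] := tuple_mge (ex_intro _ y Hy).
have [k1 Hk1] := Hx'm y Hy.
have [k2 Hk2] := Hx'm b Hb'.
have Hx'a : eqz a s x'.
  move=> p q Hp Hq; apply: (@rcan _ _ k2); rewrite -!assoc -!Hk2 //; exact: Hb.
have [k3 Hk3] := Hxm x' Hx'a.
by exists (op k3 k1) => q Hq; rewrite Hk1 // Hk3 // assoc.
Qed.

Lemma mgeS_ext a a' s x : (forall q, q \in s -> a q = a' q) -> mgeS a s x -> mgeS a' s x.
Proof.
move=> Ha [Hx Hxm]; split.
  by move=> p q Hp Hq; rewrite -!Ha //; apply: Hx.
move=> y Hy; apply: Hxm => p q Hp Hq; rewrite !Ha //; exact: Hy.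
Qed.

Lemma const_mge s : mgeS (fun _ => e) s (fun _ => e).
Proof.
split=> // y Hy; case: s Hy => [|q0 s] Hy; first by exists e.
exists (y q0) => q Hq; rewrite idl.
by have := Hy q q0 Hq (mem_head _ _); rewrite !idl.
Qed.
End Tuple.

Section Trans.
Variables (M : countType) (op : M -> M -> M) (e : M).
Hypothesis assoc : forall a b c, op a (op b c) = op (op a b) c.
Hypothesis idl : forall a, op e a = a.
Hypothesis idr : forall a, op a e = a.
Hypothesis rcan : forall a b c, op a c = op b c -> a = b.
Hypothesis pmge : forall m1 m2, equalizable op m1 m2 -> exists x, is_mge op m1 m2 x.
Variables (Sigma Q : finType) (I F : {set Q}) (Delta : seq (Q * Sigma * M * Q)).
Hypothesis Hfun : functional op e Delta I F.

Local Notation gen := (gen_trans op e Delta).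

Lemma gen_inv p s c r : gen p s c r ->
  (s = [::] /\ c = e /\ p = r) \/
  exists s' a w q m, [/\ s = rcons s' a, gen p s' w q, (q, a, m, r) \in Delta & c = op w m].
Proof.
case=> [q | q1 u w q2 a m q3 H1 H2]; [left | right; exists u, a, w, q2, m]; by [].
Qed.

Lemma gen_nil p c r : gen p [::] c r -> c = e /\ p = r.
Proof.
move/gen_inv => [[_ []] //|[s' [a [w [q [m [Hs _ _ _]]]]]]].
by move: (f_equal size Hs); rewrite size_rcons.
Qed.

Lemma gen_rcons p u a c r : gen p (rcons u a) c r <->
  exists q w m, [/\ gen p u w q, (q, a, m, r) \in Delta & c = op w m].
Proof.
split.
  move/gen_inv => [[Hs _]|[s' [a' [w [q [m [Hs H1 H2 ->]]]]]]].
    by move: (f_equal size Hs); rewrite size_rcons.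
  case: (rcons_inj Hs) => -> ->; by exists q, w, m.
by move=> [q [w [m [H1 H2 ->]]]]; apply: gen_step H1 H2.
Qed.

Lemma gen_cat p u v c r : gen p (u ++ v) c r <->
  exists q a b, [/\ gen p u a q, gen q v b r & c = op a b].
Proof.
elim/last_ind: v c r => [|v x IH] c r.
  rewrite cats0; split.
    by move=> H; exists r, c, e; split; [exact: H | exact: gen_refl | rewrite idr].
  by move=> [q [a [b [H1 /gen_nil [Hb Hq] ->]]]]; subst; rewrite idr.
rewrite -rcons_cat gen_rcons; split.
  move=> [q' [w [m [/IH [q [a [b [H1 H2 ->]]]] H3 ->]]]].
  exists q, a, (op b m); split; [exact: H1 | exact: gen_step H2 H3 | by rewrite assoc].
move=> [q [a [b [H1 /gen_rcons [q' [w [m [H2 H3 ->]]]] ->]]]].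
exists q', (op a w), m; split; [by apply/IH; exists q, a, w | exact: H3 | by rewrite assoc].
Qed.

Lemma gen_cons p x v c r : gen p (x :: v) c r <->
  exists m q b, [/\ (p, x, m, q) \in Delta, gen q v b r & c = op m b].
Proof.
rewrite -cat1s gen_cat; split.
  move=> [q [a [b [H1 H2 ->]]]].
  move: H1; rewrite -[[:: x]]/(rcons [::] x) gen_rcons => -[q0 [w [m [/gen_nil [-> <-] H3 ->]]]].
  by exists m, q, b; rewrite idl.
move=> [m [q [b [H1 H2 ->]]]]; exists q, m, b; split=> //.
rewrite -[[:: x]]/(rcons [::] x) gen_rcons; exists p, e, m.
by split; [exact: gen_refl | exact: H1 | rewrite idl].
Qed.

Definition dL (X : {set Q}) (a : Sigma) : {set Q} :=
  [set q | has (fun t : Q * Sigma * M * Q => [&& t.1.1.1 \in X, t.1.1.2 == a & t.2 == q]) Delta].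
Definition preR (Y : {set Q}) (a : Sigma) : {set Q} :=
  [set p | has (fun t : Q * Sigma * M * Q => [&& t.1.1.1 == p, t.1.1.2 == a & t.2 \in Y]) Delta].

Lemma dLP X a q : q \in dL X a <-> exists p m, p \in X /\ (p, a, m, q) \in Delta.
Proof.
rewrite inE; split.
  by move/hasP => [[[[p a'] m] q'] Ht /and3P[/= H1 /eqP H2 /eqP H3]]; subst; exists p, m.
move=> [p [m [H1 H2]]]; apply/hasP; exists (p, a, m, q) => //=.
by rewrite H1 !eqxx.
Qed.

Lemma preRP Y a p : p \in preR Y a <-> exists m q, q \in Y /\ (p, a, m, q) \in Delta.
Proof.
rewrite inE; split.
  by move/hasP => [[[[p' a'] m] q'] Ht /and3P[/= /eqP H1 /eqP H2 H3]]; subst; exists m, q'.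
move=> [m [q [H1 H2]]]; apply/hasP; exists (p, a, m, q) => //=.
by rewrite H1 !eqxx.
Qed.

Definition Lset u := foldl dL I u.
Definition Rset v := foldr (fun a Y => preR Y a) F v.

Lemma Lchar u q : q \in Lset u <-> exists p a, p \in I /\ gen p u a q.
Proof.
elim/last_ind: u q => [|u x IH] q.
  split; first by move=> Hq; exists q, e; split=> //; apply: gen_refl.
  by move=> [p [a [Hp /gen_nil [_ <-]]]].
rewrite /Lset foldl_rcons -/(Lset u) dLP; split.
  move=> [p [m [/IH [p0 [a [Hp0 H]]] Ht]]]; exists p0, (op a m); split=> //.
  exact: gen_step H Ht.
move=> [p0 [a [Hp0 /gen_rcons [q' [w [m [H1 H2 _]]]]]]].
exists q', m; split=> //; apply/IH; by exists p0, w.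
Qed.

Lemma Rchar v q : q \in Rset v <-> exists b f, f \in F /\ gen q v b f.
Proof.
elim: v q => [|x v IH] q.
  split; first by move=> Hq; exists e, q; split=> //; apply: gen_refl.
  by move=> [b [f [Hf /gen_nil [_ ->]]]].
rewrite /= preRP; split.
  move=> [m [q' [/IH [b [f [Hf H]]] Ht]]]; exists (op m b), f; split=> //.
  by apply (proj2 (gen_cons _ _ _ _ _)); exists m, q', b.
move=> [b [f [Hf /gen_cons [m [q' [b' [H1 H2 _]]]]]]].
exists m, q'; split=> //; apply/IH; by exists b', f.
Qed.

Definition alpha u q := pickP (fun a => exists p, p \in I /\ gen p u a q) e.
Definition beta v q := pickP (fun b => exists f, f \in F /\ gen q v b f) e.

Lemma alphaP u q : q \in Lset u -> exists p, p \in I /\ gen p u (alpha u q) q.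
Proof.
move/Lchar => [p [a [Hp H]]].
apply: (@pickP_spec _ (fun a => exists p, p \in I /\ gen p u a q) e); by exists a, p.
Qed.

Lemma betaP v q : q \in Rset v -> exists f, f \in F /\ gen q v (beta v q) f.
Proof.
move/Rchar => [b [f [Hf H]]].
apply: (@pickP_spec _ (fun b => exists f, f \in F /\ gen q v b f) e); by exists b, f.
Qed.

Lemma lang_cat u v p q f a b : p \in I -> f \in F -> gen p u a q -> gen q v b f ->
  in_lang op e Delta I F (u ++ v) (op a b).
Proof.
move=> Hp Hf H1 H2; exists p, f; split=> //; apply/gen_cat; by exists q, a, b.
Qed.

Lemma alpha_uniq u v p q a : q \in Rset v -> p \in I -> gen p u a q -> a = alpha u q.
Proof.
move=> Hq Hp H.
have HL : q \in Lset u by apply/Lchar; exists p, a.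
have [p' [Hp' H']] := alphaP HL.
have [f [Hf Hb]] := betaP Hq.
apply: (@rcan _ _ (beta v q)); apply: Hfun.
  exact: lang_cat Hp Hf H Hb.
exact: lang_cat Hp' Hf H' Hb.
Qed.

Lemma eqz_beta u v : eqz op (alpha u) (enum (Lset u :&: Rset v)) (beta v).
Proof.
move=> p q; rewrite !mem_enum !inE => /andP[Hp1 Hp2] /andP[Hq1 Hq2].
have [p0 [Hp0 H1]] := alphaP Hp1; have [f [Hf H2]] := betaP Hp2.
have [q0 [Hq0 H3]] := alphaP Hq1; have [g [Hg H4]] := betaP Hq2.
apply: Hfun; [exact: lang_cat Hp0 Hf H1 H2 | exact: lang_cat Hq0 Hg H3 H4].
Qed.

Definition xloc (L R : {set Q}) : Q -> M :=
  if L == I then (fun _ => e) else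
  pickP (fun x => exists u, Lset u = L /\ mgeS op (alpha u) (enum (L :&: R)) x) (fun _ => e).

Lemma xloc_mge u v : mgeS op (alpha u) (enum (Lset u :&: Rset v)) (xloc (Lset u) (Rset v)).
Proof.
rewrite /xloc; case: eqP => [HI|HI].
  apply: (@mge_transfer _ _ _ assoc idl rcan pmge _ (alpha [::]) _ _ _ (beta v)).
  - rewrite HI; exact: (@eqz_beta [::] v).
  - exact: eqz_beta.
  apply: (mgeS_ext (a := fun _ => e)); [|exact: (@const_mge M op e idl _ _)].
  move=> q; rewrite mem_enum !inE HI => /andP[Hq1 Hq2].
  apply: (@alpha_uniq [::] v q q e Hq2 Hq1); exact: gen_refl.
set P := (fun x => _).
have : P (pickP P (fun _ => e)).
  apply: pickP_spec; have [x Hx] := tuple_mge assoc idl pmge (ex_intro _ _ (@eqz_beta u v)).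
  by exists x, u.
move=> [u0 [Hu0 Hx]].
apply: (@mge_transfer _ _ _ assoc idl rcan pmge _ (alpha u0) _ _ _ (beta v)).
- have := @eqz_beta u0 v; by rewrite Hu0.
- exact: eqz_beta.
- exact: Hx.
Qed.

Definition sem (r : {set Q}) := if r == set0 then F else r.
Definition dR (r : {set Q}) (a : Sigma) : {set Q} :=
  if preR (sem r) a == set0 then setT else preR (sem r) a.
Definition xt (L : {set Q}) a (r : {set Q}) : Q -> M :=
  if r == set0 then (fun _ => e) else xloc (dL L a) r.
Definition wv L a r p : M :=
  op (pickP (fun mq : M * Q => (p, a, mq.1, mq.2) \in Delta /\ mq.2 \in sem r) (e, p)).1
     (xt L a r (pickP (fun mq : M * Q => (p, a, mq.1, mq.2) \in Delta /\ mq.2 \in sem r) (e, p)).2).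
Definition psi L a r : option M :=
  if dL L a :&: sem r == set0 then None else
  Some (pickP (fun z => forall p, p \in L :&: preR (sem r) a ->
     wv L a r p = op (xloc L (preR (sem r) a) p) z) e).
Definition rstar v := foldl dR set0 (rev v).
Definition domain t := exists m, in_lang op e Delta I F t m.
Definition X u v : Q -> M := if v is [::] then (fun _ => e) else xloc (Lset u) (Rset v).

Lemma preR0 a : preR set0 a = set0.
Proof.
apply/setP => p; rewrite [RHS]in_set0; apply/negP => /preRP [m [q [Hq _]]].
by rewrite in_set0 in Hq.
Qed.

Lemma rstar_sem v : Rset v != set0 -> sem (rstar v) = Rset v /\ (rstar v == set0) = (v == [::]).
Proof.
elim: v => [|a v IH] HR; first by rewrite /rstar /= /sem eqxx.
have HR' : Rset v != set0.
  by apply: contra HR => /eqP H; rewrite /= H preR0.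
have [IH1 IH2] := IH HR'.
rewrite /rstar rev_cons foldl_rcons -/(rstar v) /dR IH1.
have -> : preR (Rset v) a = Rset (a :: v) by [].
by rewrite (negbTE HR) /sem (negbTE HR).
Qed.

Lemma dom_split u v : domain (u ++ v) -> exists q, q \in Lset u /\ q \in Rset v.
Proof.
move=> [m [p [f [Hp Hf /gen_cat [q [a [b [H1 H2 _]]]]]]]].
exists q; split; [apply/Lchar; exists p, a | apply/Rchar; exists b, f]; by [].
Qed.

Lemma psi_star_rcons (L R : finType) dL' dR' (ps : L -> Sigma -> R -> option M) l u a r :
  psi_star op e dL' dR' ps l (rcons u a) r =
  match psi_star op e dL' dR' ps l u (dR' r a), ps (deltaL_star dL' l u) a r with
  | Some x, Some y => Some (op x y) | _, _ => None end.
Proof. by rewrite /psi_star rev_rcons /= revK. Qed.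

Lemma X_eqz u v : eqz op (alpha u) (enum (Lset u :&: Rset v)) (X u v).
Proof.
case: v => [|a v]; last exact: (xloc_mge u (a :: v)).1.
move=> p q; rewrite !mem_enum !in_setI => /andP[Hp1 Hp2] /andP[Hq1 Hq2] /=.
rewrite !idr.
have [p0 [Hp0 H1]] := alphaP Hp1; have [q0 [Hq0 H2]] := alphaP Hq1.
have L1 : in_lang op e Delta I F u (alpha u p) by exists p0, p; split.
have L2 : in_lang op e Delta I F u (alpha u q) by exists q0, q; split.
exact: Hfun L1 L2.
Qed.

Lemma xt_X u' a v : Rset v != set0 -> xt (Lset u') a (rstar v) = X (rcons u' a) v.
Proof.
move=> HR; have [H1 H2] := rstar_sem HR.
rewrite /xt H2; case: v HR H1 H2 => [|b v] HR H1 H2 //=.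
move: H1; rewrite /sem H2 /= => ->.
by rewrite /Lset foldl_rcons.
Qed.

Lemma inv u : forall v, domain (u ++ v) -> exists E,
  psi_star op e dL dR psi I u (rstar v) = Some E /\
  forall q, q \in Lset u -> q \in Rset v -> E = op (alpha u q) (X u v q).
Proof.
elim/last_ind: u => [|u' a IH] v Hd.
  exists e; split => // q Hq1 Hq2.
  have -> : alpha [::] q = e.
    by symmetry; apply: (@alpha_uniq [::] v q q e Hq2 Hq1); exact: gen_refl.
  rewrite idl; case: v Hd Hq2 => [|b v] //= _ _.
  by rewrite /xloc /Lset /= eqxx.
have Hd' : domain (u' ++ a :: v) by rewrite -cat_rcons.
have [E' [HE'1 HE'2]] := IH (a :: v) Hd'.
have [q0 [Hq0L Hq0R]] := dom_split Hd.
have HRv : Rset v != set0 by apply/set0Pn; exists q0.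
have [Hsem Hr0] := rstar_sem HRv.
rewrite psi_star_rcons.
have -> : dR (rstar v) a = rstar (a :: v) by rewrite /rstar rev_cons foldl_rcons.
rewrite HE'1.
have Hw : forall p, p \in Lset u' -> p \in Rset (a :: v) -> exists q',
    [/\ q' \in Lset (rcons u' a), q' \in Rset v &
     op (alpha u' p) (wv (Lset u') a (rstar v) p) =
     op (alpha (rcons u' a) q') (X (rcons u' a) v q')].
  move=> p Hp1 Hp2.
  rewrite /wv; set P := (fun mq : M * Q => _).
  have : P (pickP P (e, p)).
    apply: pickP_spec; move: Hp2 => /= /preRP [m [q [Hq Ht]]].
    by exists (m, q); rewrite /P /= Hsem.
  case: (pickP P (e, p)) => m q [/= Ht Hq].
  rewrite Hsem in Hq.
  have HqL : q \in Lset (rcons u' a) by rewrite /Lset foldl_rcons; apply/dLP; exists p, m.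
  exists q; split => //=; rewrite xt_X // assoc; congr (op _ _).
  have [p0 [Hp0 Hg]] := alphaP Hp1.
  apply: (@alpha_uniq _ v p0) => //; exact: gen_step Hg Ht.
have Hz : exists z, forall p, p \in Lset u' :&: preR (sem (rstar v)) a ->
    wv (Lset u') a (rstar v) p = op (xloc (Lset u') (preR (sem (rstar v)) a) p) z.
  rewrite Hsem.
  have [_ Hm] := xloc_mge u' (a :: v).
  have [k Hk] : exists k, forall q, q \in enum (Lset u' :&: Rset (a :: v)) ->
      wv (Lset u') a (rstar v) q = op (xloc (Lset u') (Rset (a :: v)) q) k.
    apply: Hm => p q; rewrite !mem_enum !in_setI => /andP[Hp1 Hp2] /andP[Hq1 Hq2].
    have [p' [Hp'1 Hp'2 ->]] := Hw p Hp1 Hp2.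
    have [q' [Hq'1 Hq'2 ->]] := Hw q Hq1 Hq2.
    by apply: X_eqz; rewrite mem_enum in_setI ?Hp'1 ?Hp'2 ?Hq'1 ?Hq'2.
  exists k => p Hp; apply: Hk; by rewrite mem_enum.
have HS' : dL (Lset u') a :&: sem (rstar v) != set0.
  rewrite Hsem; apply/set0Pn; exists q0; rewrite in_setI Hq0R andbT.
  by move: Hq0L; rewrite /Lset foldl_rcons.
have Hzs := pickP_spec e Hz.
rewrite /psi (negbTE HS').
exists (op E' (pickP (fun z => forall p, p \in Lset u' :&: preR (sem (rstar v)) a ->
    wv (Lset u') a (rstar v) p = op (xloc (Lset u') (preR (sem (rstar v)) a) p) z) e)).
split => //.
move=> q Hq1 Hq2.
have := Hq1; rewrite /Lset foldl_rcons => /dLP [p [m [Hp Ht]]].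
have HpR : p \in Rset (a :: v) by apply/preRP; exists m, q.
rewrite (HE'2 p Hp HpR) /= -assoc.
move: Hzs; set z := pickP _ e => Hzs.
rewrite Hsem in Hzs.
rewrite -Hzs; last by rewrite in_setI Hp.
have [q' [Hq'1 Hq'2 ->]] := Hw p Hp HpR.
by apply: X_eqz; rewrite mem_enum in_setI ?Hq1 ?Hq2 ?Hq'1 ?Hq'2.
Qed.

Lemma main_sets (Heps : in_lang op e Delta I F [::] e) t m :
  psi_star op e dL dR psi I t set0 = Some m <-> in_lang op e Delta I F t m.
Proof.
case: (classic (domain t)) => Hd.
  have Hd0 : domain (t ++ [::]) by rewrite cats0.
  have [E [HE1 HE2]] := inv Hd0.
  change (rstar [::]) with (@set0 Q) in HE1.
  have [q [Hq1 Hq2]] := dom_split Hd0.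
  have HEq : E = alpha t q by rewrite (HE2 q Hq1 Hq2) /= idr.
  have Hl : in_lang op e Delta I F t E.
    by rewrite HEq; have [p [Hp H]] := alphaP Hq1; exists p, q; split.
  rewrite HE1; split => [[<-] // | Hm]; congr Some; exact: Hfun Hl Hm.
split => [H|Hm]; last by exfalso; apply: Hd; exists m.
exfalso; move: Hd H; case/lastP: t => [|u a] Hd H.
  by apply: Hd; exists e.
move: H; rewrite psi_star_rcons /psi.
have -> : dL (deltaL_star dL I u) a :&: sem set0 == set0.
  apply/eqP/setP => q; rewrite [RHS]in_set0 in_setI; apply/negP => /andP[Hq1 Hq2].
  apply: Hd.
  have Hq : q \in Lset (rcons u a) by rewrite /Lset foldl_rcons.
  have [p [Hp H]] := alphaP Hq.
  rewrite /sem eqxx in Hq2.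
  by exists (alpha (rcons u a) q), p, q; split.
by case: psi_star.
Qed.
End Trans.

Lemma ps_transfer (M : countType) (op : M -> M -> M) (e : M) (Sigma L R : finType)
  (dL : L -> Sigma -> L) (dR : R -> Sigma -> R) (ps : L -> Sigma -> R -> option M) sL sR t :
  psi_star op e (fun i a => enum_rank (dL (enum_val i) a))
    (fun j a => enum_rank (dR (enum_val j) a))
    (fun i a j => ps (enum_val i) a (enum_val j)) (enum_rank sL) t (enum_rank sR) =
  psi_star op e dL dR ps sL t sR.
Proof.
have HL : forall s l, deltaL_star (fun i a => enum_rank (dL (enum_val i) a)) (enum_rank l) s
    = enum_rank (deltaL_star dL l s).
  elim=> [|x s IH] l //=; by rewrite enum_rankK IH.
rewrite /psi_star; elim: (rev t) sR => [|x rt IH] r //=.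
by rewrite enum_rankK IH HL !enum_rankK.
Qed.

Lemma card_setQ (Q : finType) : #|{set Q}| = 2 ^ #|Q|.
Proof.
have H : powerset [set: Q] = [set: {set Q}].
  by apply/setP => A; rewrite powersetE subsetT inE.
by rewrite -(cardsT {set Q}) -H card_powerset cardsT.
Qed.

Theorem theorem1 (M : countType) (op : M -> M -> M) (e : M)
  (HM : effective_mge_monoid op e)
  (Sigma Q : finType) (I F : {set Q}) (Delta : seq (Q * Sigma * M * Q))
  (Hfun : functional op e Delta I F)
  (Heps : in_lang op e Delta I F [::] e) :
  exists (nL nR : nat) (sL : 'I_nL) (sR : 'I_nR)
         (deltaL : 'I_nL -> Sigma -> 'I_nL) (deltaR : 'I_nR -> Sigma -> 'I_nR)
         (psi : 'I_nL -> Sigma -> 'I_nR -> option M),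
    [/\ nL <= 2 ^ #|Q|, nR <= 2 ^ #|Q| &
        forall (t : seq Sigma) (m : M),
          psi_star op e deltaL deltaR psi sL t sR = Some m <->
          in_lang op e Delta I F t m].
Proof.
case: HM => [[[assoc idl idr] rcan pmge] _ _ _].
exists #|{set Q}|, #|{set Q}|, (enum_rank I), (enum_rank (@set0 Q)).
exists (fun i a => enum_rank (dL Delta (enum_val i) a)).
exists (fun j a => enum_rank (dR F Delta (enum_val j) a)).
exists (fun i a j => psi op e I F Delta (enum_val i) a (enum_val j)).
split; [by rewrite card_setQ | by rewrite card_setQ |] => t m.
rewrite ps_transfer; exact: (main_sets assoc idl idr rcan pmge Hfun Heps).
Qed.
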